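(* Let $G=(V_1,V_2,E)$ be a bipartite graph with $n_1=|V_1|\ge1$, $n_2=|V_2|$, $n_2\ge n_1$, and $d=|E|$ edges, and let $n_2^{(\mathrm{odd})}\le n_2$ be the number of vertices of odd degree in $V_2$. Then there exists a collection of edge-disjoint simple cycles in $G$, each of length at most $2\lfloor 2\log_2(n_1)\rfloor$, whose union contains all but at most $\min\{2n_1+n_2,\ 4n_1+n_2^{(\mathrm{odd})}\}$ edges of $G$.
   Context: Graphs are finite and simple; the length of a cycle is its number of edges. *)

(* Defs.v *)
From mathcomp Require Import all_boot.
Set Implicit Arguments. Unset Strict Implicit. Unset Printing Implicit Defensive.

(* A bipartite graph G = (V1, V2, E) with parts the finite types T1, T2 and
   edge set E : {set T1 * T2} (an edge is a pair (x, y), x in V1, y in V2). *)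

Definition deg2 (T1 T2 : finType) (E : {set T1 * T2}) (y : T2) : nat :=
  #|[set x : T1 | (x, y) \in E]|.

Definition n2odd (T1 T2 : finType) (E : {set T1 * T2}) : nat :=
  #|[set y : T2 | odd (deg2 E y)]|.

(* The edge set of the closed walk u_0 w_0 u_1 w_1 ... u_{k-1} w_{k-1} u_0
   (u_i in V1, w_i in V2), indices mod k. *)
Definition cyc_edges (T1 T2 : finType) (k : nat) (u : 'I_k -> T1) (w : 'I_k -> T2)
  : {set T1 * T2} :=
  [set (u i, w i) | i : 'I_k] :|: [set (u (ordS i), w i) | i : 'I_k].

(* C is (the edge set of) a simple cycle of G of length 2k: k >= 2 distinct
   vertices of V1 and k distinct vertices of V2 alternating, all edges in E. *)
Definition bip_cycle (T1 T2 : finType) (E : {set T1 * T2}) (C : {set T1 * T2})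
  (k : nat) : Prop :=
  2 <= k /\ exists (u : 'I_k -> T1) (w : 'I_k -> T2),
    injective u /\ injective w /\ C = cyc_edges u w /\ C \subset E.

(* Main.v *)
Require Import Defs.
From mathcomp Require Import all_boot.
From mathcomp Require Import zify.
Set Implicit Arguments. Unset Strict Implicit. Unset Printing Implicit Defensive.


Fixpoint nbs (V : eqType) (s : seq V) : bool :=
  match s with
  | a :: t => match t with
              | b :: u => match u with
                          | c :: _ => (a != c) && nbs t
                          | [::] => true end
              | [::] => true end
  | [::] => true end.

Definition scyc (V : eqType) (e : rel V) (L : nat) (c : seq V) :=
  [/\ uniq c, cycle e c, 3 <= size c & size c <= L].

Lemma split_first (V : eqType) (P : pred V) (s : seq V) : has P s ->
  exists s1 x s2, [/\ s = s1 ++ x :: s2, P x & ~~ has P s1].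
Proof.
elim: s => //= a s IH /orP [Pa|Hs].
  by exists [::], a, s.
case Pa: (P a); first by exists [::], a, s.
have [s1 [x [s2 [-> Px Hn]]]] := IH Hs.
by exists (a :: s1), x, s2; rewrite /= Pa.
Qed.

Lemma split_mem (V : eqType) (x : V) (s : seq V) : x \in s ->
  exists s1 s2, s = s1 ++ x :: s2.
Proof.
move=> Hx.
have : has (pred1 x) s.
  by apply/hasP; exists x => //=.
move=> /split_first [s1 [y [s2 [-> /= /eqP -> _]]]].
by exists s1, s2.
Qed.

Lemma nbs_behead (V : eqType) (x : V) t : nbs (x :: t) -> nbs t.
Proof. by case: t => // y [|z u] //= /andP []. Qed.

Lemma G1 (V : eqType) (e : rel V) (eirr : irreflexive e) :
  forall t x, path e x t -> nbs (x :: t) -> ~~ uniq (x :: t) ->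
  exists c, scyc e (size t) c.
Proof.
elim=> [|y t IH] x; first by [].
move=> /andP [exy pt] Hnb Hnu.
case: (boolP (uniq (y :: t))) => Hu; last first.
  have [c [u1 u2 u3 u4]] := IH y pt (nbs_behead Hnb) Hu.
  by exists c; split => //; apply: leq_trans u4 _.
have Hx : x \in y :: t by move: Hnu; rewrite cons_uniq Hu andbT negbK.
have [s1 [s2 Es]] := split_mem Hx.
have Hp : path e x (s1 ++ x :: s2) by rewrite -Es /= exy.
move: Hp; rewrite cat_path => /andP [p1 /= /andP [ex _]].
move: Hu; rewrite Es cat_uniq => /and3P [us1 hs1 _].
have xs1 : x \notin s1 by move: hs1; apply: contra => xs1; apply/hasP; exists x => //; rewrite inE eqxx.
exists (x :: s1); split.
- by rewrite /= xs1.
- by rewrite /= rcons_path p1.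
- case: s1 Es p1 ex {us1 hs1 xs1} => [|z [|z' s1]] //=.
    by move=> _ _; rewrite eirr.
  move=> [Ey Et] _ _; move: Hnb; rewrite Et /= eqxx //.
- have := congr1 size Es; rewrite size_cat /= => ->.
  by rewrite addnS ltnS leq_addr.
Qed.


Lemma G2 (V : eqType) (e : rel V) (esym : symmetric e) :
  forall p z q, path e z p -> path e z q -> uniq (z :: p) -> uniq (z :: q) ->
  last z p = last z q -> p != q -> exists c, scyc e (size p + size q) c.
Proof.
elim=> [|a p IH] z [|b q] //.
- move=> _ _ _ /= /andP [Hz _] El _; move: Hz.
  by rewrite /= El mem_last.
- move=> _ _ /= /andP [Hz _] _ El _; move: Hz.
  by rewrite /= -El mem_last.
move=> /= /andP [eza pa] /andP [ezb pb] /andP [zp up] /andP [zq uq] El Hne.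
case: (eqVneq a b) => [Eab|Nab].
  subst b.
  have Hne' : p != q by move: Hne; apply: contra => /eqP ->.
  have [c [c1 c2 c3 c4]] := IH a q pa pb up uq El Hne'.
  exists c; split => //; apply: leq_trans c4 _.
  by rewrite /= addSn addnS leqW // leqW.
have Hhas : has (mem (a :: p)) (b :: q).
  by apply/hasP; exists (last b q); [exact: mem_last | rewrite -El /= mem_last].
have [q1 [z' [q2 [Eq Hz' Hq1]]]] := split_first Hhas.
have [p1 [p2 Ep]] := split_mem Hz'.
have Pp : path e z (p1 ++ z' :: p2) by rewrite -Ep /= eza.
have Pq : path e z (q1 ++ z' :: q2) by rewrite -Eq /= ezb.
have Up : uniq (z :: p1 ++ z' :: p2) by rewrite -Ep /= zp.
have Uq : uniq (z :: q1 ++ z' :: q2) by rewrite -Eq /= zq.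
exists (z :: p1 ++ z' :: rev q1); split.
- have -> : z :: p1 ++ z' :: rev q1 = (z :: p1 ++ [:: z']) ++ rev q1 by rewrite /= -catA.
  rewrite (_ : z :: p1 ++ z' :: p2 = (z :: p1 ++ [:: z']) ++ p2) in Up; last by rewrite /= -catA.
  rewrite (_ : z :: q1 ++ z' :: q2 = (z :: q1) ++ z' :: q2) in Uq; last by [].
  move: Up Uq; rewrite !cat_uniq => /andP [-> _] /andP [/andP [zq1 uq1] _].
  have uq1' : uniq q1 := uq1.
  have zq1' : z \notin q1 := zq1.
  rewrite rev_uniq uq1' andbT; apply/hasPn => x; rewrite mem_rev => xq1.
  rewrite inE negb_or; apply/andP; split.
    by apply: contraNneq zq1' => <-.
  apply: contra Hq1 => Hx; apply/hasP; exists x => //.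
  change (x \in a :: p).
  by rewrite Ep mem_cat; move: Hx; rewrite mem_cat inE => /orP [->//|/eqP ->]; rewrite inE eqxx orbT.
- rewrite /= rcons_cat /= cat_path; move: Pp; rewrite cat_path => /andP [-> /= /andP [-> _]] /=.
  move: Pq; rewrite cat_path => /andP [Pq1 /= /andP [Hl _]].
  have : path e z (rcons q1 z') by rewrite rcons_path Pq1.
  rewrite -rev_path belast_rcons last_rcons rev_cons.
  by rewrite (@eq_path _ _ e) // => x y; rewrite esym.
- rewrite /= size_cat /= addnS !ltnS size_rev.
  case: p1 Ep {Pp Up} => [|x p1] /=; last by [].
  case: q1 Eq Hq1 {Pq Uq} => [|y q1] /=; last by [].
  by move=> [<- _] _ [Ea _]; move: Nab; rewrite Ea eqxx.
- have := congr1 size Ep; have := congr1 size Eq; rewrite !size_cat /= => Hq Hp.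
  rewrite size_cat /= size_rev; move: Hp Hq; clear; lia.
Qed.


Definition brel (T1 T2 : finType) (F : {set T1 * T2}) : rel (T1 + T2) :=
  fun a b => match a, b with
             | inl x, inr y => (x, y) \in F
             | inr y, inl x => (x, y) \in F
             | _, _ => false end.

Lemma brel_sym (T1 T2 : finType) (F : {set T1 * T2}) : symmetric (brel F).
Proof. by case=> [x|y] [x'|y']. Qed.

Lemma brel_irr (T1 T2 : finType) (F : {set T1 * T2}) : irreflexive (brel F).
Proof. by case. Qed.

Definition isl (T1 T2 : Type) (v : T1 + T2) := if v is inl _ then true else false.

Lemma brel_side (T1 T2 : finType) (F : {set T1 * T2}) a b :
  brel F a b -> isl b = ~~ isl a.
Proof. by case: a => [x|y]; case: b. Qed.

Lemma cycle_nthP (V : Type) (e : rel V) (v0 : V) c' : cycle e (v0 :: c') ->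
  (forall i, i < size c' -> e (nth v0 (v0 :: c') i) (nth v0 (v0 :: c') i.+1)) /\
  e (nth v0 (v0 :: c') (size c')) v0.
Proof.
rewrite /= => /(pathP v0) H; split.
  move=> i Hi; have := H i; rewrite size_rcons ltnS (ltnW Hi) => /(_ isT).
  by rewrite -rcons_cons !nth_rcons /= ltnS (ltnW Hi) Hi.
have := H (size c'); rewrite size_rcons ltnSn => /(_ isT).
by rewrite -rcons_cons !nth_rcons /= ltnSn ltnn eqxx.
Qed.

Definition getl (T1 T2 : Type) (d : T1) (v : T1 + T2) := if v is inl x then x else d.
Definition getr (T1 T2 : Type) (d : T2) (v : T1 + T2) := if v is inr y then y else d.

Lemma G3l (T1 T2 : finType) (F : {set T1 * T2}) (L : nat) x0 c' :
  let c := inl x0 :: c' in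
  uniq c -> cycle (brel F) c -> 3 <= size c -> size c <= 2 * L ->
  exists C k, bip_cycle F C k /\ k <= L.
Proof.
move=> c Hu Hc H3 HL.
have [Ha Hb] := cycle_nthP Hc.
set v0 : T1 + T2 := inl x0.
have Halt : forall i, i <= size c' -> isl (nth v0 c i) = ~~ odd i.
  elim=> [|i IH] Hi //.
  by rewrite (brel_side (Ha i Hi)) IH ?(ltnW Hi) //= negbK.
have Hodd : odd (size c').
  by have := brel_side Hb; rewrite Halt // negbK => <-.
set k := (size c').+1./2.
have Hk : size c = 2 * k.
  by have := halfK (size c').+1; rewrite /= Hodd subn0 mul2n => ->.
have Hc' : 2 <= size c' by move: H3.
have [y0 _] : exists y0 : T2, True.
  have := Halt 1 (ltnW Hc'); rewrite /=.
  by case: (nth v0 c' 0) => [//|y0 _]; exists y0.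
have Hl : forall j, j < size c -> ~~ odd j -> nth v0 c j = inl (getl x0 (nth v0 c j)).
  move=> j Hj Ho; have := Halt j Hj; rewrite Ho.
  by case: (nth v0 c j).
have Hr : forall j, j < size c -> odd j -> nth v0 c j = inr (getr y0 (nth v0 c j)).
  move=> j Hj Ho; have := Halt j Hj; rewrite Ho.
  by case: (nth v0 c j).
pose u (i : 'I_k) := getl x0 (nth v0 c (2 * i)).
pose w (i : 'I_k) := getr y0 (nth v0 c (2 * i).+1).
have Hu2 : forall i : 'I_k, nth v0 c (2 * i) = inl (u i).
  move=> i; apply: Hl; last by rewrite oddM.
  by rewrite Hk ltn_pmul2l.
have Hw2 : forall i : 'I_k, nth v0 c (2 * i).+1 = inr (w i).
  move=> i; apply: Hr; last by rewrite /= oddM.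
  by rewrite Hk; have := ltn_ord i; lia.
have e1 : forall i : 'I_k, (u i, w i) \in F.
  move=> i; have := Ha (2 * i); rewrite Hu2 Hw2; apply.
  by have := ltn_ord i; have := Hk; rewrite /= => [[]]; lia.
have e2 : forall i : 'I_k, (u (ordS i), w i) \in F.
  move=> i; have [Hi|Hi] := ltnP i.+1 k.
    have -> : ordS i = Ordinal Hi by apply: val_inj; rewrite /= modn_small.
    have := Ha (2 * i).+1; rewrite Hw2.
    have -> : (2 * i).+2 = 2 * (Ordinal Hi) by rewrite /=; lia.
    rewrite Hu2; apply.
    by have := Hk; rewrite /= => [[]]; lia.
  have Eik : i.+1 = k by have := ltn_ord i; lia.
  have -> : u (ordS i) = x0 by rewrite /u /= Eik modnn.
  have Es : size c' = (2 * i).+1 by have := Hk; rewrite /= => [[]]; lia.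
  by move: Hb; rewrite Es -/v0 -/c Hw2.
exists (cyc_edges u w), k; split; last by move: HL; rewrite Hk leq_pmul2l.
split; first by move: H3; rewrite Hk; lia.
exists u, w; split; [|split; [|split=> //]].
- move=> i j E; apply: val_inj.
  have : nth v0 c (2 * i) == nth v0 c (2 * j) by rewrite !Hu2 E.
  rewrite nth_uniq // ?Hk ?ltn_pmul2l // eqn_pmul2l //.
  by move/eqP.
- move=> i j E; apply: val_inj.
  have : nth v0 c (2 * i).+1 == nth v0 c (2 * j).+1 by rewrite !Hw2 E.
  rewrite nth_uniq // ?Hk; last 2 first.
  + by have := ltn_ord i; lia.
  + by have := ltn_ord j; lia.
  by rewrite eqSS eqn_pmul2l // => /eqP.
- apply/subsetP => p; rewrite inE => /orP [] /imsetP [i _ ->]; by [].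
Qed.

Lemma G3 (T1 T2 : finType) (F : {set T1 * T2}) (L : nat) c :
  scyc (brel F) (2 * L) c -> exists C k, bip_cycle F C k /\ k <= L.
Proof.
case: c => [|v c'] [Hu Hc H3 HL] //.
case: v Hu Hc H3 HL => [x0|y0] Hu Hc H3 HL; first exact: (G3l Hu Hc H3 HL).
case: c' Hu Hc H3 HL => [|a c'] // Hu Hc H3 HL.
have Hr : rot 1 [:: inr y0, a & c'] = a :: rcons c' (inr y0) by rewrite /rot /= cats1.
have Ha : isl a.
  by move: Hc; rewrite /= => /andP [H _]; case: a H {Hu H3 HL Hr}.
case: a Ha Hr Hu Hc H3 HL => [x0 _|//] Hr Hu Hc H3 HL.
move: Hu Hc H3 HL; rewrite -(rot_uniq 1) -(rot_cycle 1) -(size_rot 1) Hr.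
exact: G3l.
Qed.


Definition okext (V : finType) (e : rel V) (v0 : V) (s : seq V) (z : V) :=
  e (head v0 s) z && (if s is _ :: b :: _ then z != b else true).

Fixpoint extall (V : finType) (e : rel V) (v0 : V) (l : seq (seq V)) :=
  if l is s :: l' then
    [seq z :: s | z <- enum [pred z | okext e v0 s z]] ++ extall e v0 l'
  else [::].

Fixpoint W (V : finType) (e : rel V) (v0 : V) (m : nat) :=
  if m is m'.+1 then extall e v0 (W e v0 m') else [:: [:: v0]].

Lemma mem_enum_pred (V : finType) (P : pred V) z : (z \in enum [pred z | P z]) = P z.
Proof. by rewrite mem_enum. Qed.

Lemma extallP (V : finType) (e : rel V) (v0 : V) l x :
  reflect (exists s z, [/\ s \in l, okext e v0 s z & x = z :: s]) (x \in extall e v0 l).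
Proof.
elim: l => [|s l IH] /=.
  by rewrite in_nil; apply: (iffP idP) => // [[s [z [//]]]].
rewrite mem_cat; apply: (iffP orP).
  case=> [/mapP [z]|H]; last first.
    by have [s' [z [H1 H2 ->]]] := elimT IH H; exists s', z; rewrite inE H1 orbT.
  by rewrite mem_enum_pred => Hz ->; exists s, z; rewrite inE eqxx.
move=> [s' [z [H1 H2 Ex]]]; move: H1; rewrite inE => /orP [/eqP Es|H1].
  by left; subst s'; rewrite Ex; apply/mapP; exists z; rewrite ?mem_enum_pred.
by right; apply/IH; exists s', z.
Qed.

Lemma extall_uniq (V : finType) (e : rel V) (v0 : V) l :
  uniq l -> uniq (extall e v0 l).
Proof.
elim: l => [|s l IH] //= /andP [sl ul].
rewrite cat_uniq IH // andbT map_inj_uniq ?enum_uniq; last by move=> ? ? [].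
apply/hasPn => x /extallP [s' [z [H1 _ ->]]].
apply/mapP => [[z' _ [_ Es]]]; move: sl; rewrite -Es H1 //.
Qed.

Lemma extall_size (V : finType) (e : rel V) (v0 : V) l K :
  (forall s, s \in l -> K <= #|[pred z | okext e v0 s z]|) ->
  K * size l <= size (extall e v0 l).
Proof.
elim: l => [|s l IH] H; first by rewrite muln0.
rewrite /= size_cat size_map -cardE mulnS leq_add //.
  by apply: H; rewrite inE eqxx.
by apply: IH => s' Hs'; apply: H; rewrite inE Hs' orbT.
Qed.

Lemma Winv (V : finType) (e : rel V) (v0 : V) (sd : pred V)
  (esym : symmetric e) (eside : forall a b, e a b -> sd b = ~~ sd a) (sd0 : sd v0) :
  forall m s, s \in W e v0 m ->
  [/\ size s = m.+1, last v0 s = v0, path e (head v0 s) (behead s), nbs s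
    & sd (head v0 s) = ~~ odd m].
Proof.
elim=> [|m IH] s /=.
  by rewrite inE => /eqP ->.
move=> /extallP [s' [z [Hs' Hok ->]]].
have [H1 H2 H3 H4 H5] := IH s' Hs'.
case: s' Hs' Hok H1 H2 H3 H4 H5 => [//|a t] Hs' /andP [Hza Hnb] H1 H2 H3 H4 H5.
split => //=.
- by move: H1 => /= ->.
- by rewrite esym Hza.
- by move: Hnb H4; case: t {Hs' H1 H2 H3 H5 Hza} => //= b t -> ->.
- by move: H5 => /= H5; rewrite (eside _ _ Hza) H5.
Qed.

Lemma W_uniq (V : finType) (e : rel V) (v0 : V) m : uniq (W e v0 m).
Proof. by elim: m => [|m IH] //=; apply: extall_uniq. Qed.

Lemma ext_count (V : finType) (e : rel V) (v0 : V) (sd : pred V)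
  (esym : symmetric e) (eside : forall a b, e a b -> sd b = ~~ sd a) (sd0 : sd v0)
  (Hdeg : forall v, (exists z, e v z) -> (if sd v then 3 else 2) <= #|[pred z | e v z]|)
  (Hv0 : exists z, e v0 z) :
  forall m s, s \in W e v0 m ->
  (if m is 0 then 3 else if odd m then 1 else 2) <= #|[pred z | okext e v0 s z]|.
Proof.
case=> [|m] s Hs.
  move: Hs; rewrite inE => /eqP ->.
  have := Hdeg v0 Hv0; rewrite sd0 => H; apply: leq_trans H _.
  by apply: subset_leq_card; apply/subsetP => z; rewrite !inE /okext /= andbT.
have [H1 H2 H3 H4 H5] := Winv esym eside sd0 Hs.
case: s Hs H1 H2 H3 H4 H5 => [|h [|b t]] //= Hs H1 H2 /andP [ehb _] H4 H5.
have := Hdeg h (ex_intro _ b ehb); rewrite H5.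
rewrite (cardD1x (A := e h) ehb).
have -> : #|[pred i | e h i & i != b]| = #|[pred z | okext e v0 [:: h, b & t] z]|.
  by apply: eq_card => z; rewrite !inE.
by case: (odd m) => /=; lia.
Qed.

Lemma Wcount (V : finType) (e : rel V) (v0 : V) (sd : pred V)
  (esym : symmetric e) (eside : forall a b, e a b -> sd b = ~~ sd a) (sd0 : sd v0)
  (Hdeg : forall v, (exists z, e v z) -> (if sd v then 3 else 2) <= #|[pred z | e v z]|)
  (Hv0 : exists z, e v0 z) :
  forall j, 3 * 2 ^ j <= size (W e v0 (2 * j.+1)).
Proof.
have step := fun m => extall_size (fun s Hs => ext_count esym eside sd0 Hdeg Hv0 (m := m) Hs).
elim=> [|j IH].
  have := step 1; have := step 0; rewrite /= !mul1n => H0 H1.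
  by apply: leq_trans H1.
have := step (2 * j.+1).+1; have := step (2 * j.+1).
have E : 2 * j.+1 = (2 * j).+2 by lia.
have E2 : 2 * j.+2 = (2 * j).+4 by lia.
rewrite E2 E /= oddM /= !mul1n => Ha Hb.
move: IH; rewrite E /= expnS => IH.
lia.
Qed.

Fixpoint Lst (V : finType) (e : rel V) (v0 : V) (r : nat) :=
  if r is r'.+1 then W e v0 (2 * r) ++ Lst e v0 r' else W e v0 0.

Lemma Lst_mem (V : finType) (e : rel V) (v0 : V) r s :
  s \in Lst e v0 r -> exists j, j <= r /\ s \in W e v0 (2 * j).
Proof.
elim: r => [|r IH] /=; first by move=> H; exists 0.
rewrite mem_cat => /orP [H|/IH [j [Hj H]]]; first by exists r.+1.
by exists j; rewrite ltnW.
Qed.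

Lemma scyc_weak (V : eqType) (e : rel V) L L' c : L <= L' -> scyc e L c -> scyc e L' c.
Proof. by move=> HL [? ? ? H]; split => //; apply: leq_trans H HL. Qed.

Lemma short_cycle (V : finType) (e : rel V) (v0 : V) (sd : pred V)
  (esym : symmetric e) (eirr : irreflexive e)
  (eside : forall a b, e a b -> sd b = ~~ sd a) (sd0 : sd v0)
  (Hdeg : forall v, (exists z, e v z) -> (if sd v then 3 else 2) <= #|[pred z | e v z]|)
  (Hv0 : exists z, e v0 z) r :
  #|sd| + 2 < 3 * 2 ^ r -> exists c, scyc e (4 * r) c.
Proof.
move=> Hr.
have Winv' := Winv esym eside sd0.
have Hsize : 3 * 2 ^ r <= size (Lst e v0 r) + 2.
  elim: r {Hr} => [|r IH]; first by [].
  change (Lst e v0 r.+1) with (W e v0 (2 * r.+1) ++ Lst e v0 r).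
  have := Wcount esym eside sd0 Hdeg Hv0 r.
  rewrite size_cat expnS; lia.
have Huniq : uniq (Lst e v0 r).
  elim: r {Hr Hsize} => [|r IH]; first by [].
  change (Lst e v0 r.+1) with (W e v0 (2 * r.+1) ++ Lst e v0 r).
  rewrite cat_uniq IH W_uniq andbT.
  apply/hasPn => s /Lst_mem [j [Hj Hs]]; apply/negP => Hs'.
  have [E1 _ _ _ _] := Winv' _ _ Hs; have [E2 _ _ _ _] := Winv' _ _ Hs'.
  move: E1; rewrite E2. lia.
have Hinfo : forall s, s \in Lst e v0 r -> exists h t, [/\ s = h :: t, size t <= 2 * r,
    path e h t, nbs s & last h t = v0] /\ sd h.
  move=> s /Lst_mem [j [Hj Hs]]; have [E1 E2 E3 E4 E5] := Winv' _ _ Hs.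
  case: s Hs E1 E2 E3 E4 E5 => [//|h t] Hs /= [E1] E2 E3 E4 E5.
  exists h, t; split; last by rewrite E5 oddM.
  by split => //; rewrite E1 leq_mul2l Hj orbT.
case: (boolP (uniq (map (head v0) (Lst e v0 r)))) => Hu.
  have : size (map (head v0) (Lst e v0 r)) <= size (enum sd).
    apply: uniq_leq_size => // x /mapP [s Hs ->].
    have [h [t [[-> _ _ _ _] Hh]]] := Hinfo s Hs.
    by rewrite mem_enum.
  by rewrite size_map -cardE; lia.
move/(uniqPn v0): Hu => [i [j [Hij Hj Eij]]].
rewrite size_map in Hj.
have Hi : i < size (Lst e v0 r) by apply: ltn_trans Hj.
rewrite !(nth_map [::]) // in Eij.
have Hne : nth [::] (Lst e v0 r) i != nth [::] (Lst e v0 r) j.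
  by rewrite nth_uniq // neq_ltn Hij.
have [h1 [t1 [[E1 S1 P1 N1 L1] _]]] := Hinfo _ (mem_nth [::] Hi).
have [h2 [t2 [[E2 S2 P2 N2 L2] _]]] := Hinfo _ (mem_nth [::] Hj).
rewrite E1 E2 /= in Eij Hne; subst h2.
case: (boolP (uniq (h1 :: t1))) => U1; last first.
  have N1' : nbs (h1 :: t1) by rewrite -E1.
  have [c Hc] := G1 eirr P1 N1' U1.
  by exists c; apply: scyc_weak Hc; lia.
case: (boolP (uniq (h1 :: t2))) => U2; last first.
  have N2' : nbs (h1 :: t2) by rewrite -E2.
  have [c Hc] := G1 eirr P2 N2' U2.
  by exists c; apply: scyc_weak Hc; lia.
have Ht : t1 != t2 by apply: contra Hne => /eqP ->.
have [c Hc] := G2 esym P1 P2 U1 U2 (etrans L1 (Logic.eq_sym L2)) Ht.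
by exists c; apply: scyc_weak Hc; lia.
Qed.


Definition deg1 (T1 T2 : finType) (F : {set T1 * T2}) (x : T1) : nat :=
  #|[set y : T2 | (x, y) \in F]|.

Lemma core_cycle (T1 T2 : finType) (F : {set T1 * T2}) x0 y0 :
  (forall x, deg1 F x = 0 \/ 3 <= deg1 F x) -> (forall y, deg2 F y != 1) ->
  (x0, y0) \in F ->
  exists C k, bip_cycle F C k /\ k <= trunc_log 2 (#|T1| ^ 2).
Proof.
move=> Hx Hy H0.
have Hy2 : forall y x, (x, y) \in F -> 2 <= deg2 F y.
  move=> y x Hxy; have : 0 < deg2 F y by apply/card_gt0P; exists x; rewrite inE.
  by have := Hy y; case: (deg2 F y) => [|[|n]].
have Hx3 : forall x y, (x, y) \in F -> 3 <= deg1 F x.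
  move=> x y Hxy; have : 0 < deg1 F x by apply/card_gt0P; exists y; rewrite inE.
  by case: (Hx x) => ->.
have Hn1 : 2 <= #|T1| by apply: leq_trans (Hy2 _ _ H0) (max_card _).
set n1 := #|T1| in Hn1 *.
set r := trunc_log 2 n1.
have /andP [Hlo Hhi] : 2 ^ r <= n1 < 2 ^ r.+1.
  by apply: trunc_log_bounds => //; lia.
have Hr1 : 1 <= r by apply: trunc_log_max.
have Hsd : #|[pred v : T1 + T2 | isl v]| <= n1.
  apply: (@leq_trans #|[set (@inl T1 T2) x | x in [set: T1]]|); last first.
    by apply: leq_trans (leq_imset_card _ _) _; rewrite cardsT.
  apply: subset_leq_card; apply/subsetP; case=> [x|y] //= _.
  by apply/imsetP; exists x; rewrite ?inE.
have [c Hc] : exists c, scyc (brel F) (4 * r) c.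
  apply: (@short_cycle _ (brel F) (inl x0) [pred v | isl v]).
  - exact: brel_sym.
  - exact: brel_irr.
  - move=> a b; exact: brel_side.
  - by [].
  - case=> [x|y] [[x'|y'] //= Hz].
      apply: leq_trans (Hx3 _ _ Hz) _.
      rewrite /deg1 -(card_imset _ (@inr_inj T1 T2)).
      apply: subset_leq_card; apply/subsetP => v /imsetP [y'' Hy'' ->].
      by move: Hy''; rewrite !inE.
    apply: leq_trans (Hy2 _ _ Hz) _.
    rewrite /deg2 -(card_imset _ (@inl_inj T1 T2)).
    apply: subset_leq_card; apply/subsetP => v /imsetP [x'' Hx'' ->].
    by move: Hx''; rewrite !inE.
  - by exists (inr y0).
  - have H2r : 2 ^ 1 <= 2 ^ r by apply: leq_pexp2l.
    rewrite expnS expn1 in Hhi H2r.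
    apply: leq_ltn_trans (leq_add Hsd (leqnn 2)) _; lia.
have [C [k [HC Hk]]] := @G3 _ _ F (2 * r) c (ltac:(by rewrite mulnA)).
exists C, k; split => //; apply: leq_trans Hk _.
apply: trunc_log_max => //.
by rewrite mulnC expnM leq_exp2r.
Qed.

Definition Ax (T1 T2 : finType) (F : {set T1 * T2}) := #|[set x | 0 < deg1 F x]|.
Definition Ay (T1 T2 : finType) (F : {set T1 * T2}) := #|[set y | 0 < deg2 F y]|.

Lemma deg1_mono (T1 T2 : finType) (F G : {set T1 * T2}) x :
  F \subset G -> deg1 F x <= deg1 G x.
Proof.
move=> /subsetP H; apply: subset_leq_card; apply/subsetP => y.
by rewrite !inE => /H.
Qed.

Lemma deg2_mono (T1 T2 : finType) (F G : {set T1 * T2}) y :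
  F \subset G -> deg2 F y <= deg2 G y.
Proof.
move=> /subsetP H; apply: subset_leq_card; apply/subsetP => x.
by rewrite !inE => /H.
Qed.

Lemma Ax_mono (T1 T2 : finType) (F G : {set T1 * T2}) :
  F \subset G -> Ax F <= Ax G.
Proof.
move=> H; apply: subset_leq_card; apply/subsetP => x; rewrite !inE => Hx.
exact: leq_trans Hx (deg1_mono _ H).
Qed.

Lemma Ay_mono (T1 T2 : finType) (F G : {set T1 * T2}) :
  F \subset G -> Ay F <= Ay G.
Proof.
move=> H; apply: subset_leq_card; apply/subsetP => x; rewrite !inE => Hx.
exact: leq_trans Hx (deg2_mono _ H).
Qed.

Lemma prune (T1 T2 : finType) n (F : {set T1 * T2}) : #|F| <= n ->
  2 * Ax F + Ay F < #|F| ->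
  exists F' : {set T1 * T2}, [/\ F' \subset F, 2 * Ax F' + Ay F' < #|F'|,
    (forall x, deg1 F' x = 0 \/ 3 <= deg1 F' x) & (forall y, deg2 F' y != 1)].
Proof.
elim: n F => [|n IH] F HF HP.
  by move: HP HF; lia.
case: (boolP [exists x, (0 < deg1 F x) && (deg1 F x < 3)]) => [/existsP [x /andP [Hx1 Hx3]]|Hnx].
  pose F' := F :\: [set p | p.1 == x].
  have Hsub : F' \subset F by apply: subsetDl.
  have Hc : #|F :&: [set p | p.1 == x]| = deg1 F x.
    have inj : injective (@pair T1 T2 x) by move=> a b [].
    rewrite /deg1 -(card_imset _ inj); apply: eq_card => -[a b].
    rewrite !inE; apply/idP/imsetP.
      by move=> /andP [Hab /eqP /= Ea]; subst a; exists b; rewrite ?inE.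
    by move=> [y]; rewrite inE => Hy [-> ->]; rewrite Hy eqxx.
  have HF' : #|F'| + deg1 F x = #|F| by rewrite -Hc addnC cardsID.
  have HAx : (Ax F').+1 <= Ax F.
    rewrite /Ax (cardsD1 x [set x0 | 0 < deg1 F x0]) inE Hx1 add1n ltnS.
    apply: subset_leq_card; apply/subsetP => x'; rewrite !inE => Hx'.
    have Hd := deg1_mono x' Hsub; rewrite (leq_trans Hx' Hd) andbT.
    apply/eqP => Ex; move: Hx'; rewrite Ex.
    rewrite /deg1 (_ : [set y | (x, y) \in F'] = set0) ?cards0 //.
    by apply/setP => y; rewrite !inE eqxx.
  have HAy := Ay_mono Hsub.
  have [F'' [H1 H2 H3 H4]] : exists F'' : {set T1 * T2}, [/\ F'' \subset F', 2 * Ax F'' + Ay F'' < #|F''|,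
    (forall x, deg1 F'' x = 0 \/ 3 <= deg1 F'' x) & (forall y, deg2 F'' y != 1)].
    apply: IH; lia.
  by exists F''; split => //; apply: subset_trans H1 Hsub.
case: (boolP [exists y, deg2 F y == 1]) => [/existsP [y Hy]|Hny].
  have [x Ex] := cards1P Hy.
  have Hxy : (x, y) \in F.
    have : x \in [set x0 | (x0, y) \in F] by rewrite Ex set11.
    by rewrite inE.
  pose F' := F :\ (x, y).
  have Hsub : F' \subset F by apply: subsetDl.
  have HF' : #|F| = #|F'|.+1 by rewrite (cardsD1 (x, y) F) Hxy.
  have HAy : (Ay F').+1 <= Ay F.
    rewrite /Ay (cardsD1 y [set y0 | 0 < deg2 F y0]) inE (eqP Hy) add1n ltnS.
    apply: subset_leq_card; apply/subsetP => y'; rewrite !inE => Hy'.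
    have Hd := deg2_mono y' Hsub; rewrite (leq_trans Hy' Hd) andbT.
    apply/eqP => Ey; move: Hy'; rewrite Ey.
    rewrite /deg2 (_ : [set x0 | (x0, y) \in F'] = set0) ?cards0 //.
    apply/setP => x0; rewrite !inE.
    case: (boolP ((x0, y) \in F)) => H; rewrite ?andbF //.
    have : x0 \in [set x0 | (x0, y) \in F] by rewrite inE.
    by rewrite Ex inE => /eqP ->; rewrite eqxx.
  have HAx := Ax_mono Hsub.
  have [F'' [H1 H2 H3 H4]] : exists F'' : {set T1 * T2}, [/\ F'' \subset F', 2 * Ax F'' + Ay F'' < #|F''|,
    (forall x, deg1 F'' x = 0 \/ 3 <= deg1 F'' x) & (forall y, deg2 F'' y != 1)].
    apply: IH; lia.
  by exists F''; split => //; apply: subset_trans H1 Hsub.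
exists F; split => //.
  move=> x; move/existsPn: Hnx => /(_ x).
  by case: (deg1 F x) => [|[|[|d]]] //= _; [left|right].
by move/existsPn: Hny.
Qed.


Lemma ordS_neq k (i : 'I_k) : 2 <= k -> ordS i != i.
Proof.
move=> Hk; apply/eqP => /(congr1 val) /=.
have [Hi|Hi] := ltnP i.+1 k.
  by rewrite modn_small //; lia.
have -> : i.+1 = k by have := ltn_ord i; lia.
by rewrite modnn; lia.
Qed.

Lemma cyc_parity (T1 T2 : finType) (X H C : {set T1 * T2}) k y :
  bip_cycle X C k -> C \subset H -> odd (deg2 (H :\: C) y) = odd (deg2 H y).
Proof.
case=> Hk [u [w [iu [iw [EC _]]]]] HC.
pose S := [set x | (x, y) \in C].
have HS : S \subset [set x | (x, y) \in H].
  by apply/subsetP => x; rewrite !inE => /(subsetP HC).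
have -> : deg2 (H :\: C) y = deg2 H y - #|S|.
  have E1 : #|S| = #|[set x | (x, y) \in H] :&: S| by rewrite (setIidPr HS).
  rewrite /deg2 E1 -cardsD.
  by apply: eq_card => x; rewrite !inE.
have HSo : ~~ odd #|S|.
  case: (boolP [exists i, w i == y]) => [/existsP [i /eqP Ei]|Hn].
    have -> : S = [set u i; u (ordS i)].
      apply/setP => x; rewrite !inE EC !inE; apply/orP/orP.
        case=> /imsetP [j _ [-> Ej]]; have Eij : j = i by apply: iw; rewrite -Ej.
          by left; rewrite Eij.
        by right; rewrite Eij.
      case=> /eqP ->; [left|right]; apply/imsetP; exists i; by rewrite ?Ei.
    rewrite cards2.
    have -> : u i != u (ordS i) by apply/eqP => /iu /eqP; rewrite eq_sym (negbTE (ordS_neq i Hk)).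
    by [].
  have -> : S = set0.
    apply/setP => x; rewrite !inE EC !inE; apply/negP => /orP [] /imsetP [j _ [_ Ej]];
    by move/existsPn: Hn => /(_ j); rewrite Ej eqxx.
  by rewrite cards0.
rewrite oddB; last by apply: subset_leq_card HS.
by rewrite (negbTE HSo) addbF.
Qed.

Lemma card_sum_nat (T : finType) (P : pred T) : #|[set x | P x]| = \sum_x (P x : nat).
Proof.
rewrite -sum1_card big_mkcond /=; apply: eq_bigr => x _.
by rewrite inE; case: (P x).
Qed.

Lemma card_deg2 (T1 T2 : finType) (R : {set T1 * T2}) : #|R| = \sum_y deg2 R y.
Proof.
have -> : #|R| = #|[set p | p \in R]| by apply: eq_card => p; rewrite inE.
rewrite card_sum_nat.
rewrite (eq_bigr (fun p : T1 * T2 => ((p.1, p.2) \in R : nat))); last by case.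
rewrite -(pair_big xpredT xpredT (fun x y => ((x, y) \in R : nat))) /= exchange_big /=.
by apply: eq_bigr => y _; rewrite /deg2 card_sum_nat.
Qed.

Lemma Ay_odd (T1 T2 : finType) (R : {set T1 * T2}) :
  2 * Ay R <= #|R| + #|[set y | odd (deg2 R y)]|.
Proof.
rewrite /Ay !card_sum_nat card_deg2 big_distrr -big_split /=.
apply: leq_sum => y _.
by case: (deg2 R y) => [|[|d]].
Qed.

Lemma bip_cycle_n0 (T1 T2 : finType) (X C : {set T1 * T2}) k :
  bip_cycle X C k -> exists p, p \in C.
Proof.
case=> Hk [u [w [_ [_ [-> _]]]]].
case: k Hk u w => // k _ u w; exists (u ord0, w ord0).
by rewrite !inE; apply/orP; left; apply/imsetP; exists ord0.
Qed.

Lemma bip_cycle_sub (T1 T2 : finType) (X Y C : {set T1 * T2}) k :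
  bip_cycle X C k -> X \subset Y -> bip_cycle Y C k /\ C \subset X.
Proof.
case=> Hk [u [w [iu [iw [EC HC]]]]] HXY; split => //.
split => //; exists u, w; do 3 split => //.
exact: subset_trans HC HXY.
Qed.

Lemma main_ind (T1 T2 : finType) (E : {set T1 * T2}) n :
  forall H : {set T1 * T2}, #|H| <= n -> H \subset E ->
  exists P : {set {set T1 * T2}},
    [/\ trivIset P,
        (forall C, C \in P -> exists k, bip_cycle E C k /\ k <= trunc_log 2 (#|T1| ^ 2)),
        cover P \subset H,
        #|H :\: cover P| <= 2 * #|T1| + Ay (H :\: cover P)
      & forall y, odd (deg2 (H :\: cover P) y) = odd (deg2 H y)].
Proof.
elim: n => [|n IH] H Hn HE.
  exists set0; rewrite /trivIset /cover !big_set0 setD0 sub0set cards0; split => //.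
    by move=> C; rewrite inE.
  by move: Hn; lia.
case: (boolP (#|H| <= 2 * #|T1| + Ay H)) => Hsmall.
  exists set0; rewrite /trivIset /cover !big_set0 setD0 sub0set cards0; split => //.
  by move=> C; rewrite inE.
have HP : 2 * Ax H + Ay H < #|H|.
  by have := max_card [set x | 0 < deg1 H x]; rewrite -/(Ax H); lia.
have [F [HFH HFP HFx HFy]] := prune (leqnn _) HP.
have [[x0 y0] Hp0] : exists p, p \in F by apply/card_gt0P; lia.
have [C [k [HC Hk]]] := core_cycle HFx HFy Hp0.
have [HCE HCF] := bip_cycle_sub HC (subset_trans HFH HE).
have HCH : C \subset H := subset_trans HCF HFH.
have [pC HpC] := bip_cycle_n0 HC.
set H' := H :\: C.
have HH' : #|H'| <= n.
  have : 0 < #|C| by apply/card_gt0P; exists pC.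
  rewrite /H' cardsD (setIidPr HCH); move: Hn; lia.
have [P' [T' HP' Hcov' Hsz' Hodd']] := IH H' HH' (subset_trans (subsetDl _ _) HE).
have n0 : set0 \notin P'.
  apply/negP => /HP' [k' [/bip_cycle_n0 [p] ]]; by rewrite inE.
have Hdis : {in P', forall B : {set T1 * T2}, [disjoint C & B]}.
  move=> B HB; rewrite -setI_eq0; apply/eqP/setP => p; rewrite !inE.
  apply/negP => /andP [pC' pB].
  have : p \in H' by apply: (subsetP Hcov'); apply/bigcupP; exists B.
  by rewrite /H' inE pC'.
have [Htriv HCn] := trivIsetU1 Hdis T' n0.
have Hcov : cover (C |: P') = C :|: cover P' by rewrite /cover big_setU1.
exists (C |: P'); rewrite Hcov -setDDl; split => //.
- move=> C' /setU1P [->|HC']; first by exists k.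
  exact: HP'.
- rewrite subUset HCH; apply: subset_trans Hcov' _; exact: subsetDl.
- move=> y; rewrite Hodd'; exact: cyc_parity HC HCH.
Qed.


Theorem lemmaA3 (T1 T2 : finType) (E : {set T1 * T2}) :
  1 <= #|T1| -> #|T1| <= #|T2| ->
  exists P : {set {set T1 * T2}},
    trivIset P /\
    (forall C, C \in P -> exists k, bip_cycle E C k /\
                           2 * k <= 2 * trunc_log 2 (#|T1| ^ 2)) /\
    #|E :\: cover P| <= minn (2 * #|T1| + #|T2|) (4 * #|T1| + n2odd E).
Proof.
move=> _ _.
have [P [HT HC _ Hsz Hodd]] := main_ind (leqnn #|E|) (subxx E).
exists P; split => //; split.
  move=> C /HC [k [Hk Hl]]; exists k; split => //; by rewrite leq_mul2l Hl orbT.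
set R := E :\: cover P in Hsz Hodd *.
have HAy : Ay R <= #|T2| by apply: max_card.
have Ho : n2odd E = #|[set y | odd (deg2 R y)]|.
  by apply: eq_card => y; rewrite !inE Hodd.
have := Ay_odd R.
move=> HA; rewrite leq_min Ho; apply/andP; split; lia.
Qed.
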